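(* Let $\mathbb K\subset\mathbb{R}^{d_{\mathrm{input}}}$ be bounded and let $\tilde g:\mathbb K\to\mathbb{R}$ be 1-Lipschitz with respect to the $\ell_\infty$-norm, i.e. $|\tilde g(\mathbf x_1)-\tilde g(\mathbf x_2)|\le\|\mathbf x_1-\mathbf x_2\|_\infty$. Then for every $\epsilon>0$ there exists an $\ell_\infty$-dist net $g$ with scalar output, all of whose layers have width at most $d_{\mathrm{input}}+2$, such that $|g(\mathbf x)-\tilde g(\mathbf x)|\le\epsilon$ for all $\mathbf x\in\mathbb K$.
   Context: An $L$-layer $\ell_\infty$-dist net takes $\mathbf x^{(0)}=\mathbf x\in\mathbb{R}^{d_{\mathrm{input}}}$ and computes, for $1\le l\le L$, $1\le k\le d_l$, $x^{(l)}_k=\|\mathbf x^{(l-1)}-\mathbf w^{(l,k)}\|_\infty+b^{(l,k)}$, with arbitrary real parameters $\mathbf w^{(l,k)}\in\mathbb{R}^{d_{l-1}}$ ($d_0=d_{\mathrm{input}}$) and $b^{(l,k)}\in\mathbb{R}$; its width is $\max_l d_l$. For a scalar-output net ($d_L=1$) the computed function is $g(\mathbf x)=-x^{(L)}_1$. The depth $L$ is arbitrary (finite). *)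

(* Defs.v *)
From HB Require Import structures.
From mathcomp Require Import all_boot all_order all_algebra.
From mathcomp Require Import reals.
Set Implicit Arguments. Unset Strict Implicit. Unset Printing Implicit Defensive.
Import Order.TTheory GRing.Theory Num.Theory.
Local Open Scope ring_scope.

Definition linf (R : realType) (n : nat) (x : 'I_n -> R) : R :=
  \big[Num.max/0]_(i < n) `|x i|.

Definition dist_layer (R : realType) (din dout : nat)
  (w : 'I_dout -> 'I_din -> R) (b : 'I_dout -> R) (x : 'I_din -> R)
  : 'I_dout -> R :=
  fun k => linf (fun j => x j - w k j) + b k.

Inductive distnet (R : realType) : nat -> nat -> Type :=
| DLast (din dout : nat) (w : 'I_dout -> 'I_din -> R) (b : 'I_dout -> R) :
    distnet R din dout
| DCons (din dmid dout : nat) (w : 'I_dmid -> 'I_din -> R) (b : 'I_dmid -> R) :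
    distnet R dmid dout -> distnet R din dout.

Fixpoint net_eval (R : realType) (din dout : nat) (N : distnet R din dout)
  : ('I_din -> R) -> 'I_dout -> R :=
  match N with
  | DLast _ _ w b => dist_layer w b
  | DCons _ _ _ w b rest => fun x => net_eval rest (dist_layer w b x)
  end.

Fixpoint net_width (R : realType) (din dout : nat) (N : distnet R din dout) : nat :=
  match N with
  | DLast _ dout _ _ => dout
  | DCons _ dmid _ _ _ rest => maxn dmid (net_width rest)
  end.

Definition net_fun (R : realType) (din : nat) (N : distnet R din 1)
  (x : 'I_din -> R) : R := - net_eval N x ord0.

(* Main.v *)
From Stdlib Require Import FunctionalExtensionality ClassicalDescription IndefiniteDescription Classical.
Require Import Defs.
From HB Require Import structures.
From mathcomp Require Import all_boot all_order all_algebra.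
From mathcomp Require Import reals.
From mathcomp Require Import lra.
Set Implicit Arguments. Unset Strict Implicit. Unset Printing Implicit Defensive.
Import Order.TTheory GRing.Theory Num.Theory.
Local Open Scope ring_scope.

Lemma linf_ge0 (R : realType) n (v : 'I_n -> R) : 0 <= linf v.
Proof.
rewrite /linf; elim/big_ind: _ => //.
by move=> x y hx hy; rewrite le_max hx.
Qed.

Lemma linf_ge (R : realType) n (v : 'I_n -> R) i : `|v i| <= linf v.
Proof. by rewrite /linf (bigD1 i) //= le_max lexx. Qed.

Lemma linf_le (R : realType) n (v : 'I_n -> R) t :
  0 <= t -> (forall i, `|v i| <= t) -> linf v <= t.
Proof.
move=> t0 H; rewrite /linf; elim/big_ind: _ => //.
by move=> x y hx hy; rewrite ge_max hx hy.
Qed.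

Definition mk (R : realType) d (C : R) (x : 'I_d -> R) (u v : R) : 'I_(d+2) -> R :=
  fun j => match split j with inl k => x k + C | inr t => if t == ord0 then u else v end.

Lemma mk_l (R : realType) d (C : R) x u v (k : 'I_d) : mk C x u v (lshift 2 k) = x k + C.
Proof. by rewrite /mk (unsplitK (inl _ k)). Qed.
Lemma mk_0 (R : realType) d (C : R) x u v : mk C x u v (rshift d (ord0 : 'I_2)) = u.
Proof. by rewrite /mk (unsplitK (inr _ (ord0 : 'I_2))). Qed.
Lemma mk_1 (R : realType) d (C : R) x u v : mk C x u v (rshift d (ord_max : 'I_2)) = v.
Proof. by rewrite /mk (unsplitK (inr _ (ord_max : 'I_2))). Qed.

Lemma split_l d (k : 'I_d) : split (lshift 2 k) = inl k.
Proof. exact: (unsplitK (inl _ k)). Qed.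
Lemma split_r d (t : 'I_2) : split (rshift d t) = inr t.
Proof. exact: (unsplitK (inr _ t)). Qed.

Lemma linf_eqi (R : realType) n (v : 'I_n -> R) i t :
  `|v i| = t -> (forall j, `|v j| <= t) -> linf v = t.
Proof.
move=> Hi H; apply/le_anti/andP; split.
  by apply: linf_le => //; rewrite -Hi normr_ge0.
by rewrite -Hi linf_ge.
Qed.

Lemma nb (R : realType) (x r : R) : `|x| <= r -> -r <= x /\ x <= r.
Proof. by rewrite ler_norml => /andP. Qed.

Lemma bn (R : realType) (x r : R) : -r <= x -> x <= r -> `|x| <= r.
Proof. by move=> h1 h2; rewrite ler_norml h1 h2. Qed.

Lemma nge (R : realType) (x : R) : 0 <= x -> `|x| = x.
Proof. exact: ger0_norm. Qed.

Definition w0 (R : realType) d (C : R) : 'I_(d+2) -> 'I_d -> R :=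
  fun k j => match split k with inl k' => if j == k' then - C else 0 | inr _ => 0 end.
Definition b0 (R : realType) d (C Rb : R) : 'I_(d+2) -> R :=
  fun k => match split k with inl _ => 0 | inr _ => C - Rb end.

Lemma layer0 (R : realType) d (C Rb : R) (x : 'I_d -> R) :
  (forall k, `|x k| <= Rb) -> 0 <= Rb -> 2 * Rb <= C ->
  dist_layer (w0 C) (b0 C Rb) x = mk C x (linf x - Rb + C) (linf x - Rb + C).
Proof.
move=> Hx R0 HC; apply: functional_extensionality => j.
rewrite /dist_layer /mk /w0 /b0; case: (split j) => [k|t].
  rewrite addr0; apply: (linf_eqi (i := k)).
    rewrite eqxx opprK nge //; have := nb (Hx k); lra.
  move=> i; case: eqP => [->|_].
    rewrite opprK nge //; have := nb (Hx k); lra.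
  rewrite subr0; move: (nb (Hx i)) (nb (Hx k)) => [? ?] [? ?]; apply: bn; lra.
have -> : (fun j0 => x j0 - 0) = x by apply: functional_extensionality => ?; rewrite subr0.
by case: ifP => _; lra.
Qed.

Definition w1 (R : realType) d (C : R) (a : 'I_d -> R) (wv : R) : 'I_(d+2) -> 'I_(d+2) -> R :=
  fun k j => match split k, split j with
  | inl k', inl j' => if j' == k' then 0 else C
  | inl _, inr _ => C
  | inr t, inl j' => if t == ord0 then a j' + C else C
  | inr t, inr _ => if t == ord0 then wv + C else 0 end.

Lemma layer1 (R : realType) d (C Rb W : R) (x a : 'I_d -> R) (m wv : R) :
  (forall k, `|x k| <= Rb) -> (forall k, `|a k| <= Rb) -> `|m| <= Rb -> `|wv| <= W ->
  0 <= Rb -> 0 <= W -> 3 * Rb + W <= C ->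
  dist_layer (w1 C a wv) (fun _ => 0) (mk C x (m + C) (m + C)) =
  mk C x (Num.max (linf (fun k => x k - a k)) `|m - wv|) (m + C).
Proof.
move=> Hx Ha Hm Hw R0 W0 HC; apply: functional_extensionality => j.
have [? ?] := nb Hm.
rewrite /dist_layer {2}/mk /w1 addr0; case: (split j) => [k|t].
  apply: (linf_eqi (i := lshift 2 k)).
    rewrite mk_l split_l eqxx subr0 nge //; have := nb (Hx k); lra.
  move=> i; rewrite /mk; case: (split i) => [i'|t].
    case: eqP => [->|_].
      rewrite subr0 nge //; have := nb (Hx k); lra.
    move: (nb (Hx i')) (nb (Hx k)) => [? ?] [? ?]; apply: bn; lra.
  have [? ?] := nb (Hx k); case: ifP => _; apply: bn; lra.
case: ifP => [_|_].
  apply/le_anti/andP; split.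
    apply: linf_le; first by rewrite le_max linf_ge0.
    move=> i; rewrite /mk; case: (split i) => [i'|t'].
      rewrite le_max; apply/orP; left.
      have -> : x i' + C - (a i' + C) = x i' - a i' by lra.
      exact: (linf_ge (fun k => x k - a k)).
    rewrite le_max; apply/orP; right.
    rewrite if_same; have -> : m + C - (wv + C) = m - wv by lra.
    done.
  rewrite ge_max; apply/andP; split.
    apply: linf_le; first exact: linf_ge0.
    move=> i; apply: le_trans (linf_ge _ (lshift 2 i)).
    by rewrite mk_l split_l; have -> : x i + C - (a i + C) = x i - a i by lra.
  apply: le_trans (linf_ge _ (rshift d ord0)).
  by rewrite mk_0 split_r; have -> : m + C - (wv + C) = m - wv by lra.
apply: (linf_eqi (i := rshift d ord0)).
  rewrite mk_0 split_r subr0 nge //; lra.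
move=> i; rewrite /mk; case: (split i) => [i'|t'].
  have [? ?] := nb (Hx i'); apply: bn; lra.
by rewrite if_same subr0 nge; lra.
Qed.

Definition w2 (R : realType) d (C : R) (c : R) : 'I_(d+2) -> 'I_(d+2) -> R :=
  fun k j => match split k, split j with
  | inl k', inl j' => if j' == k' then 0 else C
  | inl _, inr t => if t == ord0 then 0 else C
  | inr _, inl _ => C
  | inr _, inr t => if t == ord0 then c + C else 0 end.

Lemma layer2 (R : realType) d (C Rb W : R) (x : 'I_d -> R) (m p c : R) :
  (forall k, `|x k| <= Rb) -> `|m| <= Rb -> `|c| <= Rb -> 0 <= p -> p <= 2 * Rb + W ->
  0 <= Rb -> 0 <= W -> 3 * Rb + W <= C ->
  dist_layer (w2 C c) (fun _ => 0) (mk C x p (m + C)) =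
  mk C x (Num.max m (c - p) + C) (Num.max m (c - p) + C).
Proof.
move=> Hx Hm Hc p0 pb R0 W0 HC; apply: functional_extensionality => j.
have [? ?] := nb Hm; have [? ?] := nb Hc.
have E : Num.max m (c - p) + C = Num.max (m + C) (c + C - p).
  by case: (leP m (c - p)) => h; case: leP => h'; lra.
rewrite /dist_layer {2}/mk /w2 addr0; case: (split j) => [k|t].
  apply: (linf_eqi (i := lshift 2 k)).
    rewrite mk_l split_l eqxx subr0 nge //; have := nb (Hx k); lra.
  move=> i; rewrite /mk; case: (split i) => [i'|t].
    case: eqP => [->|_].
      rewrite subr0 nge //; have := nb (Hx k); lra.
    move: (nb (Hx i')) (nb (Hx k)) => [? ?] [? ?]; apply: bn; lra.
  have [? ?] := nb (Hx k); case: ifP => _; apply: bn; lra.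
rewrite E; case: ifP => _.
  apply/le_anti/andP; split.
    apply: linf_le; first by rewrite le_max; apply/orP; left; lra.
    move=> i; rewrite /mk; case: (split i) => [i'|t'].
      have [? ?] := nb (Hx i'); rewrite le_max; apply/orP; left; apply: bn; lra.
    case: ifP => _; rewrite le_max; apply/orP.
      by right; rewrite ler0_norm; lra.
    by left; rewrite subr0 nge; lra.
  rewrite ge_max; apply/andP; split.
    apply: le_trans (linf_ge _ (rshift d ord_max)).
    by rewrite mk_1 split_r /= subr0 nge; lra.
  apply: le_trans (linf_ge _ (rshift d ord0)).
  by rewrite mk_0 split_r /= ler0_norm; lra.
apply/le_anti/andP; split.
  apply: linf_le; first by rewrite le_max; apply/orP; left; lra.
  move=> i; rewrite /mk; case: (split i) => [i'|t'].
    have [? ?] := nb (Hx i'); rewrite le_max; apply/orP; left; apply: bn; lra.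
  case: ifP => _; rewrite le_max; apply/orP.
    by right; rewrite ler0_norm; lra.
  by left; rewrite subr0 nge; lra.
rewrite ge_max; apply/andP; split.
  apply: le_trans (linf_ge _ (rshift d ord_max)).
  by rewrite mk_1 split_r /= subr0 nge; lra.
apply: le_trans (linf_ge _ (rshift d ord0)).
by rewrite mk_0 split_r /= ler0_norm; lra.
Qed.

Definition wf (R : realType) d (C : R) : 'I_1 -> 'I_(d+2) -> R :=
  fun _ j => match split j with inl _ => C | inr _ => C + C end.

Lemma layerf (R : realType) d (C Rb : R) (x : 'I_d -> R) (m : R) :
  (forall k, `|x k| <= Rb) -> `|m| <= Rb -> 0 <= Rb -> 3 * Rb <= C ->
  dist_layer (@wf _ d C) (fun _ => - C) (mk C x (m + C) (m + C)) ord0 = - m.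
Proof.
move=> Hx Hm R0 HC; have [? ?] := nb Hm.
rewrite /dist_layer (@linf_eqi _ _ _ (rshift d ord0) (C - m)); first by lra.
  by rewrite mk_0 /wf split_r ler0_norm; lra.
move=> i; rewrite /mk /wf; case: (split i) => [i'|t'].
  have [? ?] := nb (Hx i'); apply: bn; lra.
by rewrite if_same ler0_norm; lra.
Qed.

Definition step (R : realType) d (x : 'I_d -> R) (m : R) (t : ('I_d -> R) * R * R) : R :=
  let: (a, c, wv) := t in Num.max m (c - Num.max (linf (fun k => x k - a k)) `|m - wv|).

Fixpoint blocks (R : realType) d (C : R) (l : seq (('I_d -> R) * R * R))
  (tail : distnet R (d+2) 1) : distnet R (d+2) 1 :=
  match l with
  | [::] => tail
  | (a, c, wv) :: l' => DCons (w1 C a wv) (fun _ => 0) (DCons (w2 C c) (fun _ => 0) (blocks C l' tail))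
  end.

Lemma blocks_width (R : realType) d (C : R) l (tail : distnet R (d+2) 1) :
  (net_width tail <= d + 2)%N -> (net_width (blocks C l tail) <= d + 2)%N.
Proof.
move=> Ht; elim: l => [|[[a c] wv] l IH] //=.
by rewrite !geq_max leqnn.
Qed.

Lemma step_ge (R : realType) d (x : 'I_d -> R) m t : m <= step x m t.
Proof. by case: t => [[a c] wv]; rewrite /step le_max lexx. Qed.

Lemma step_bound (R : realType) d (x : 'I_d -> R) (m : R) (a : 'I_d -> R) (c wv Rb : R) :
  `|m| <= Rb -> `|c| <= Rb -> `|step x m (a, c, wv)| <= Rb.
Proof.
move=> Hm Hc; have [? ?] := nb Hm; have [? ?] := nb Hc.
have h1 := linf_ge0 (fun k => x k - a k).
have p0 : 0 <= Num.max (linf (fun k => x k - a k)) `|m - wv| by rewrite le_max h1.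
rewrite /step; move: p0; set p := Num.max _ _ => p0.
by case: (leP m (c - p)) => h; apply: bn; lra.
Qed.

Fixpoint allp (T : Type) (P : T -> Prop) (l : seq T) : Prop :=
  match l with [::] => True | t :: l' => P t /\ allp P l' end.

Lemma allp_map (T : eqType) (U : Type) (P : U -> Prop) (g : T -> U) (s : seq T) :
  (forall x, x \in s -> P (g x)) -> allp P (map g s).
Proof.
elim: s => //= x s IH H; split; first by apply: H; rewrite mem_head.
by apply: IH => y ys; apply: H; rewrite in_cons ys orbT.
Qed.

Lemma allp_cat (T : Type) (P : T -> Prop) (s1 s2 : seq T) :
  allp P s1 -> allp P s2 -> allp P (s1 ++ s2).
Proof. by elim: s1 => //= x s IH [? ?] ?; split => //; apply: IH. Qed.

Lemma allp_flatten_map (T : Type) (U : Type) (P : U -> Prop) (f : T -> seq U) (s : seq T) :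
  (forall x, allp P (f x)) -> allp P (flatten (map f s)).
Proof. by move=> H; elim: s => //= x s IH; apply: allp_cat. Qed.

Lemma allp_impl (T : Type) (P Q : T -> Prop) (s : seq T) :
  (forall x, P x -> Q x) -> allp P s -> allp Q s.
Proof. by move=> H; elim: s => //= x s IH [? ?]; split; auto. Qed.

Lemma blocks_eval (R : realType) d (C Rb W : R) (x : 'I_d -> R) (l : seq (('I_d -> R) * R * R)) (tail : distnet R (d+2) 1) (m : R) :
  (forall k, `|x k| <= Rb) -> 
  (allp (fun t =>  (forall k, `|t.1.1 k| <= Rb) /\ `|t.1.2| <= Rb /\ `|t.2| <= W) l) ->
  `|m| <= Rb -> 0 <= Rb -> 0 <= W -> 3 * Rb + W <= C ->
  net_eval (blocks C l tail) (mk C x (m + C) (m + C)) =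
  net_eval tail (mk C x (foldl (step x) m l + C) (foldl (step x) m l + C)).
Proof.
move=> Hx; elim: l m => [//|[[a c] wv] l IH] m Hl Hm R0 W0 HC /=.
move: Hl => [[Ha [Hc Hw]] Hl]; rewrite /= in Ha Hc Hw.
rewrite (layer1 (Rb := Rb) (W := W)) //.
have h1 := linf_ge0 (fun k => x k - a k).
have [? ?] := nb Hm.
rewrite (layer2 (Rb := Rb) (W := W)) //; first last.
- rewrite ge_max; apply/andP; split.
    apply: linf_le; first lra.
    move=> k; have [? ?] := nb (Hx k); have [? ?] := nb (Ha k); apply: bn; lra.
  have [? ?] := nb Hw; apply: bn; lra.
- by rewrite le_max h1.
rewrite IH //.
exact: step_bound.
Qed.

Lemma fold_ge (R : realType) d (x : 'I_d -> R) l m : m <= foldl (step x) m l.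
Proof. elim: l m => //= t l IH m; exact: le_trans (step_ge x m t) (IH _). Qed.

Lemma fold_bound (R : realType) d (x : 'I_d -> R) (Rb : R) l m :
  allp (fun t : ('I_d -> R) * R * R => `|t.1.2| <= Rb) l -> `|m| <= Rb ->
  `|foldl (step x) m l| <= Rb.
Proof.
elim: l m => //= [[[a c] wv]] l IH m [Hc Hl] Hm; apply: IH => //.
exact: step_bound.
Qed.

Lemma fold_upper (R : realType) d (x : 'I_d -> R) (G0 : R) l m :
  allp (fun t : ('I_d -> R) * R * R => t.1.2 - linf (fun k => x k - t.1.1 k) <= G0) l ->
  m <= G0 -> foldl (step x) m l <= G0.
Proof.
elim: l m => //= [[[a c] wv]] l IH m [Hc Hl] Hm; apply: IH => //=.
rewrite /step ge_max Hm /=.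
apply: le_trans Hc; rewrite lerD2l lerN2 le_max lexx //.
Qed.

Lemma step_scan (R : realType) d (x : 'I_d -> R) (a : 'I_d -> R) (c w h m : R) :
  0 <= h ->
  let T := c - linf (fun k => x k - a k) - h in
  (T <= m \/ w - h <= m) -> (T <= step x m (a, c, w) \/ w <= step x m (a, c, w)).
Proof.
move=> h0 T Hm; have Hs := step_ge x m (a, c, w).
have h1 := linf_ge0 (fun k => x k - a k).
case: (lerP T m) => hT; first by left; apply: le_trans Hs.
case: (lerP w m) => hw; first by right; apply: le_trans Hs.
left; case: Hm => Hm; first by move: hT; rewrite ltNge Hm.
rewrite /step le_max; apply/orP; right.
have : `|m - w| <= h by apply: bn; lra.
rewrite /T; case: (leP (linf (fun k => x k - a k)) `|m - w|) => _ ?; lra.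
Qed.

Lemma scan (R : realType) d (x : 'I_d -> R) (a : 'I_d -> R) (c w0 h : R) n :
  0 <= h ->
  let T := c - linf (fun k => x k - a k) - h in
  forall s (m : R), (T <= m \/ w0 + s%:R * h - h <= m) ->
  (T <= foldl (step x) m [seq (a, c, w0 + j%:R * h) | j <- iota s n] \/
   w0 + (s + n)%:R * h - h <= foldl (step x) m [seq (a, c, w0 + j%:R * h) | j <- iota s n]).
Proof.
move=> h0 T; elim: n => [|n IH] s m Hm /=; first by rewrite addn0.
have := @step_scan _ _ x a c (w0 + s%:R * h) h m h0 Hm.
move=> H; have := IH s.+1 (step x m (a, c, w0 + s%:R * h)).
rewrite addSnnS; apply; case: H => H; [left | right] => //.
by move: H; rewrite -addn1 natrD; lra.
Qed.

Lemma linf_tri (R : realType) n (u v w : 'I_n -> R) :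
  linf (fun i => u i - w i) <= linf (fun i => u i - v i) + linf (fun i => w i - v i).
Proof.
apply: linf_le; first by rewrite addr_ge0 // linf_ge0.
move=> i; have := linf_ge (fun i => u i - v i) i; have := linf_ge (fun i => w i - v i) i.
move=> /nb [? ?] /nb [? ?]; apply: bn; lra.
Qed.

Lemma linf_sub (R : realType) n (u v : 'I_n -> R) :
  linf (fun i => u i - v i) <= linf u + linf v.
Proof.
apply: linf_le; first by rewrite addr_ge0 // linf_ge0.
move=> i; have := linf_ge u i; have := linf_ge v i.
move=> /nb [? ?] /nb [? ?]; apply: bn; lra.
Qed.

Lemma grid (R : realType) n (y h : R) : 0 < h -> 0 <= y -> y <= n%:R * h ->
  exists i : 'I_n.+1, `|y - i%:R * h| <= h.
Proof.
move=> h0; elim: n => [|n IH] y0 yn.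
  by exists ord0; rewrite /= mul0r subr0 ger0_norm //; lra.
case: (leP y (n%:R * h)) => hy.
  by have [i Hi] := IH y0 hy; exists (widen_ord (leqnSn _) i).
exists ord_max; move: yn; rewrite /= -addn1 natrD => yn.
by apply: bn; lra.
Qed.

Definition cval (R : realType) d (K : ('I_d -> R) -> Prop) (gt : ('I_d -> R) -> R)
  (h G : R) (p : 'I_d -> R) : R :=
  match excluded_middle_informative (exists a, K a /\ linf (fun k => a k - p k) <= h) with
  | left H => gt (proj1_sig (constructive_indefinite_description _ H)) - h
  | right _ => - G end.

Lemma cval_spec (R : realType) d (K : ('I_d -> R) -> Prop) (gt : ('I_d -> R) -> R)
  (h G : R) (p : 'I_d -> R) :
  (exists a, K a /\ linf (fun k => a k - p k) <= h /\ cval K gt h G p = gt a - h) \/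
  (~ (exists a, K a /\ linf (fun k => a k - p k) <= h) /\ cval K gt h G p = - G).
Proof.
rewrite /cval; case: excluded_middle_informative => [H|H]; last by right.
left; case: (constructive_indefinite_description _ H) => a [Ka Ha] /=.
by exists a.
Qed.

Lemma split_mem (T : eqType) (s : seq T) x : x \in s -> exists s1 s2, s = s1 ++ x :: s2.
Proof. by case/splitPr => s1 s2; exists s1, s2. Qed.

Unset Implicit Arguments.
Set Strict Implicit.

Theorem theorem1 (R : realType) (d : nat) (K : ('I_d -> R) -> Prop)
  (gt : ('I_d -> R) -> R) :
  (exists M : R, forall x, K x -> linf x <= M) ->
  (forall x1 x2, K x1 -> K x2 -> `|gt x1 - gt x2| <= linf (fun i => x1 i - x2 i)) ->
  forall eps : R, 0 < eps ->
  exists N : distnet R d 1,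
    (net_width N <= d + 2)%N /\
    (forall x, K x -> `|net_fun N x - gt x| <= eps).
Proof.
move=> [M HM] Lip eps eps0.
case: (classic (exists x0, K x0)) => [[x0 Kx0]|nK]; last first.
  exists (DLast (fun _ _ => 0) (fun _ => 0)); split; first by rewrite /= addn2.
  by move=> x Kx; case: nK; exists x.
have M0 : 0 <= M := le_trans (linf_ge0 x0) (HM _ Kx0).
pose G := `|gt x0| + M + M.
have HG : forall x, K x -> `|gt x| <= G.
  move=> x Kx; have := Lip _ _ Kx Kx0; have := linf_sub x x0.
  have := HM _ Kx; have := HM _ Kx0; have := nb (lexx `|gt x0|).
  move=> [? ?] ? ? ? /nb [? ?]; apply: bn; rewrite /G; lra.
have G0 : 0 <= G by rewrite /G; have := normr_ge0 (gt x0); lra.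
pose h := eps / 5.
have h0 : 0 < h by rewrite /h divr_gt0.
have heps : eps = 5 * h by rewrite /h; lra.
have [n Hn] : exists n : nat, 2 * M < n%:R * h.
  exists (Num.Def.archi_bound (2 * M / h)); rewrite -ltr_pdivrMr //.
  by apply: archi_boundP; rewrite divr_ge0 //; lra.
pose p (g : {ffun 'I_d -> 'I_n.+1}) : 'I_d -> R := fun k => - M + (g k)%:R * h.
pose Rb := M + G + h + n%:R * h + 1.
have hn0 : 0 <= n%:R * h :> R by rewrite mulr_ge0 // ltW.
have Rb0 : 0 <= Rb by rewrite /Rb; lra.
have [J HJ] : exists J : nat, 2 * Rb < J%:R * h.
  exists (Num.Def.archi_bound (2 * Rb / h)); rewrite -ltr_pdivrMr //.
  by apply: archi_boundP; rewrite divr_ge0 //; lra.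
pose W := Rb + J%:R * h.
have W0 : 0 <= W by rewrite /W; lra.
pose C := 5 * Rb + W + 1.
pose c g := cval K gt h G (p g).
pose f g := [seq (p g, c g, - Rb + j%:R * h) | j <- iota 0 J.+1].
pose l := flatten [seq f g | g <- enum {ffun 'I_d -> 'I_n.+1}].
exists (DCons (w0 C) (b0 C Rb) (blocks C l (DLast (@wf _ d C) (fun _ => - C)))).
split.
  by rewrite /= geq_max leqnn /=; apply: blocks_width; rewrite /= addn2.
move=> x Kx.
have HxM : forall k, `|x k| <= M := fun k => le_trans (linf_ge x k) (HM _ Kx).
have Hx : forall k, `|x k| <= Rb.
  by move=> k; have [? ?] := nb (HxM k); apply: bn; rewrite /Rb; lra.
have HgtG := nb (HG _ Kx).
have Hp : forall g k, `|p g k| <= Rb.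
  move=> g k; have : ((g k)%:R <= n%:R :> R) by rewrite ler_nat -ltnS ltn_ord.
  move=> hk; have : (g k)%:R * h <= n%:R * h by rewrite ler_pM2r.
  have : 0 <= (g k)%:R * h :> R by rewrite mulr_ge0 // ltW.
  by rewrite /p => ? ?; apply: bn; rewrite /Rb; lra.
have Hc : forall g, `|c g| <= Rb.
  move=> g; rewrite /c; case: (cval_spec K gt h G (p g)) => [[a [Ka [_ ->]]]|[_ ->]].
    by have [? ?] := nb (HG _ Ka); apply: bn; rewrite /Rb; lra.
  by apply: bn; rewrite /Rb; lra.
have Hall : allp (fun t : ('I_d -> R) * R * R =>
     (forall k, `|t.1.1 k| <= Rb) /\ `|t.1.2| <= Rb /\ `|t.2| <= W) l.
  apply: allp_flatten_map => g; apply: allp_map => j; rewrite mem_iota add0n ltnS => /= Hj.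
  split; first exact: Hp. split; first exact: Hc.
  have : (j%:R <= J%:R :> R) by rewrite ler_nat.
  move=> hj; have : j%:R * h <= J%:R * h by rewrite ler_pM2r.
  have : 0 <= j%:R * h :> R by rewrite mulr_ge0 // ltW.
  by move=> ? ?; apply: bn; rewrite /W; lra.
have Hm0 : `|linf x - Rb| <= Rb.
  by have := HM _ Kx; have := linf_ge0 x => ? ?; apply: bn; rewrite /Rb; lra.
have HC1 : 2 * Rb <= C by rewrite /C; lra.
have HC2 : 3 * Rb + W <= C by rewrite /C; lra.
rewrite /net_fun /= (layer0 Hx Rb0 HC1).
rewrite (blocks_eval (Rb := Rb) (W := W)) //.
set mf := foldl (step x) (linf x - Rb) l.
have Hmf : `|mf| <= Rb.
  apply: fold_bound => //; apply: allp_impl Hall => t [_ []] //.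
rewrite /= (layerf Hx Hmf Rb0); last by rewrite /C; lra.
rewrite opprK.
have Up : mf <= gt x.
  apply: fold_upper.
    apply: allp_flatten_map => g; apply: allp_map => j _ /=.
    rewrite /c; case: (cval_spec K gt h G (p g)) => [[a [Ka [Ha ->]]]|[_ ->]].
      have := Lip _ _ Ka Kx; have := linf_tri a (p g) x.
      move=> ? /nb [? ?]; lra.
    by have := linf_ge0 (fun k => x k - p g k); lra.
  by have := HM _ Kx; rewrite /Rb; lra.
pose gs : {ffun 'I_d -> 'I_n.+1} :=
  [ffun k => odflt ord0 [pick i : 'I_n.+1 | `|x k + M - i%:R * h| <= h]].
have Hgs : forall k, `|x k + M - (gs k)%:R * h| <= h.
  move=> k; rewrite /gs ffunE; case: pickP => [i Hi //|H0].
  have [? ?] := nb (HxM k).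
  have y0 : 0 <= x k + M by lra.
  have yn : x k + M <= n%:R * h by lra.
  have [i Hi] := grid h0 y0 yn.
  by move: (H0 i); rewrite Hi.
have Hd : linf (fun k => x k - p gs k) <= h.
  apply: linf_le; first exact: ltW.
  by move=> k; rewrite /p; have -> : x k - (- M + (gs k)%:R * h) = x k + M - (gs k)%:R * h by lra.
have Hcs : gt x - 3 * h <= c gs.
  rewrite /c; case: (cval_spec K gt h G (p gs)) => [[a [Ka [Ha ->]]]|[nE _]].
    have := Lip _ _ Ka Kx; have := linf_tri a (p gs) x.
    move=> ? /nb [? ?]; lra.
  by case: nE; exists x.
have [s1 [s2 Es]] := split_mem (mem_enum {ffun 'I_d -> 'I_n.+1} gs).
have Low : gt x - 5 * h <= mf.
  rewrite /mf /l Es map_cat flatten_cat map_cons (_ : flatten (f gs :: _) = f gs ++ flatten [seq f g | g <- s2]) // !foldl_cat.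
  set m1 := foldl _ (linf x - Rb) _.
  have Hm1 : - Rb <= m1.
    by apply: le_trans (fold_ge _ _ _); have := linf_ge0 x; lra.
  have := @scan R d x (p gs) (c gs) (- Rb) h J.+1 (ltW h0) 0%N m1.
  rewrite /f; move=> /(_ _) [].
  - by right; rewrite mul0r; lra.
  - by move=> H; apply: le_trans (fold_ge _ _ _); apply: le_trans H; lra.
  - move=> H; apply: le_trans (fold_ge _ _ _); apply: le_trans H.
    have := Hc gs; move=> /nb [? ?].
    move: HJ; rewrite add0n -addn1 natrD; lra.
by apply: bn; lra.
Qed.
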